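(* Let $f\in\mathbf{C}\{X,Y\}$ be a nonzero power series without constant term such that the curve $f=0$ is reduced, and let $l\in\mathbf{C}\{X,Y\}$ be a power series without constant term with $\operatorname{ord} l=1$. Let $J(f,l)=\frac{\partial f}{\partial X}\frac{\partial l}{\partial Y}-\frac{\partial f}{\partial Y}\frac{\partial l}{\partial X}$ and assume $J(f,l)(0,0)=0$. If the curves $l=0$ and $f=0$ are transverse, then the curves $l=0$ and $J(f,l)=0$ are transverse.
   Context: $\mathbf{C}\{X,Y\}$ is the ring of convergent complex power series. For a nonzero series $g=\sum c_{\alpha\beta}X^\alpha Y^\beta$, $\operatorname{ord} g=\min\{\alpha+\beta: c_{\alpha\beta}\neq 0\}$ and the initial form of $g$ is $\sum_{\alpha+\beta=\operatorname{ord} g}c_{\alpha\beta}X^\alpha Y^\beta$; the tangents to $g=0$ are the lines given by the linear factors of the initial form. Two curves are transverse if they have no common tangent. A curve $f=0$ is reduced if $f$ has no multiple irreducible factors. *)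

(* Defs.v *)
From mathcomp Require Import all_boot all_algebra complex.
From mathcomp Require Import reals Rstruct.
Import GRing.Theory Num.Theory ComplexField.
Local Open Scope complex_scope.
Local Open Scope ring_scope.

Notation CC := (Rdefinitions.R[i]).

(* A (formal) power series in X, Y: coefficient c a b of X^a Y^b. *)
Definition ps := nat -> nat -> CC.

(* Convergence: the series converges on some polydisc of radius r > 0,
   i.e. (Cauchy estimates) |c_ab| r^(a+b) is bounded. C{X,Y} = convergent ps. *)
Definition convergent (f : ps) : Prop :=
  exists r M : Rdefinitions.R, 0 < r /\
    forall a b, `|f a b| * (r%:C) ^+ (a + b) <= M%:C.

Definition ps0 : ps := fun _ _ => 0.
Definition ps1 : ps := fun a b => if (a == 0%N) && (b == 0%N) then 1 else 0.

Definition psmul (f g : ps) : ps := fun a b =>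
  \sum_(i < a.+1) \sum_(j < b.+1) f i j * g (a - i)%N (b - j)%N.

Definition dX (f : ps) : ps := fun a b => f a.+1 b *+ a.+1.
Definition dY (f : ps) : ps := fun a b => f a b.+1 *+ b.+1.

Definition Jac (f l : ps) : ps := fun a b =>
  psmul (dX f) (dY l) a b - psmul (dY f) (dX l) a b.

Definition ps_unit (g : ps) : Prop :=
  exists h, convergent h /\ psmul g h = ps1.

Definition ps_irreducible (g : ps) : Prop :=
  convergent g /\ g <> ps0 /\ ~ ps_unit g /\
  forall h k, convergent h -> convergent k -> g = psmul h k ->
    ps_unit h \/ ps_unit k.

Definition reduced (f : ps) : Prop :=
  ~ exists g h, ps_irreducible g /\ convergent h /\ f = psmul (psmul g g) h.

Definition has_ord (g : ps) (d : nat) : Prop :=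
  [exists a : 'I_d.+1, g a (d - a)%N != 0] /\
  forall a b, (a + b < d)%N -> g a b = 0.

(* the degree-d homogeneous part (initial form when d = ord g) *)
Definition homog_part (g : ps) (d : nat) : ps := fun a b =>
  if (a + b == d)%N then g a b else 0.

Definition linform (u v : CC) : ps := fun a b =>
  if (a == 1%N) && (b == 0%N) then u
  else if (a == 0%N) && (b == 1%N) then v else 0.

(* the line u X + v Y = 0 is a tangent to g = 0: uX+vY is a (nonzero) linear
   factor of the initial form of g *)
Definition tangent (g : ps) (u v : CC) : Prop :=
  (u != 0 \/ v != 0) /\
  exists d, has_ord g d /\ exists h, homog_part g d = psmul (linform u v) h.

Definition transverse (g1 g2 : ps) : Prop :=
  g1 <> ps0 /\ g2 <> ps0 /\
  ~ exists u v, tangent g1 u v /\ tangent g2 u v.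

(* Main.v *)
Require Import Defs.
From mathcomp Require Import all_boot all_algebra complex.
From mathcomp Require Import reals Rstruct ring zify.
From Stdlib Require Import Classical FunctionalExtensionality.
Import GRing.Theory Num.Theory ComplexField.
Local Open Scope complex_scope.
Local Open Scope ring_scope.

Lemma psmul_lin (u v : CC) (h : ps) a b : psmul (linform u v) h a b =
  (if a is a'.+1 then u * h a' b else 0) + (if b is b'.+1 then v * h a b' else 0).
Proof.
rewrite /psmul big_ord_recl /= big_ord_recl /= /linform /= !subn0 mul0r add0r.
have E1 : \sum_(i < a) \sum_(j < b.+1)
        (if (bump 0 i == 1%N) && (nat_of_ord j == 0%N) then u else 0) *
        h (a - bump 0 i)%N (b - j)%N = if a is a'.+1 then u * h a' b else 0.
  case: a => [|a]; first by rewrite big_ord0.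
  rewrite big_ord_recl.
  rewrite [X in _ + X]big1; last first.
    move=> i _. 
    rewrite big1 //. 
    move=> j _; by rewrite /bump /= mul0r.
  rewrite big_ord_recl. 
  rewrite big1 /=; last by move=> j _; rewrite /bump /= mul0r.
  by rewrite /bump /= subn0 subSS subn0 !addr0.
have E2 : \sum_(i < b)
     (if bump 0 i == 1%N then v else 0) * h a (b - bump 0 i)%N = if b is b'.+1 then v * h a b' else 0.
  clear E1; case: b => [|b]; first by rewrite big_ord0.
  rewrite big_ord_recl big1; last by move=> i _; rewrite /bump /= mul0r.
  by rewrite /bump /= subSS subn0 addr0.
by rewrite E1 E2 addrC.
Qed.

Definition Ev (g : ps) (d : nat) (x y : CC) : CC :=
  \sum_(a < d.+1) g a (d - a)%N * x ^+ a * y ^+ (d - a)%N.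

Lemma Ev_div g d u v h : homog_part g d = psmul (linform u v) h -> Ev g d v (-u) = 0.
Proof.
move=> Hg.
have Hc : forall a, (a <= d)%N -> g a (d-a)%N = psmul (linform u v) h a (d-a)%N.
  by move=> a ha; rewrite -Hg /homog_part subnKC // eqxx.
rewrite /Ev (eq_bigr (fun i : 'I_d.+1 => psmul (linform u v) h i (d - i)%N * v ^+ i * (-u) ^+ (d - i)%N)); last first.
  by move=> i _; rewrite Hc // -ltnS.
under eq_bigr do rewrite psmul_lin !mulrDl.
rewrite big_split /=.
case: d {Hg Hc} => [|n].
  by rewrite !big_ord_recl !big_ord0 /= !mul0r !add0r.
rewrite big_ord_recl [X in _ + X = _]big_ord_recr /= subnn !mul0r add0r addr0 -big_split /=.
apply: big1 => i _.
have hi : (i <= n)%N by rewrite -ltnS.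
rewrite /bump /= add0n add1n subSS subSn // !exprS.
ring.
Qed.

Lemma Ev_scale g d c x y : Ev g d (c * x) (c * y) = c ^+ d * Ev g d x y.
Proof.
rewrite /Ev mulr_sumr; apply: eq_bigr => i _.
have hi : (i <= d)%N by rewrite -ltnS.
rewrite !exprMn.
have -> : c ^+ d = c ^+ i * c ^+ (d - i) by rewrite -exprD subnKC.
ring.
Qed.

Lemma has_ord_uniq g d1 d2 : has_ord g d1 -> has_ord g d2 -> d1 = d2.
Proof.
move=> [/existsP [a1 H1] L1] [/existsP [a2 H2] L2].
case: (ltngtP d1 d2) => // h.
- move: H1; rewrite L2 ?eqxx //. rewrite subnKC //. by rewrite -ltnS.
- move: H2; rewrite L1 ?eqxx //. rewrite subnKC //. by rewrite -ltnS.
Qed.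

Lemma has_ord_ex g : g <> ps0 -> exists d, has_ord g d.
Proof.
move=> hg.
have [a [b hab]] : exists a b, g a b != 0.
  apply: NNPP => H; apply: hg; apply: functional_extensionality => a.
  apply: functional_extensionality => b; rewrite /ps0; case: (eqVneq (g a b) 0) => // hn.
  by exfalso; apply: H; exists a, b.
have Pex : exists d, [exists x : 'I_d.+1, g x (d - x)%N != 0].
  exists (a + b)%N; apply/existsP.
  have ha : (a < (a + b).+1)%N by rewrite ltnS leq_addr.
  by exists (Ordinal ha); rewrite /= addKn.
case: (ex_minnP Pex) => d Pd Hmin.
exists d; split => // a' b' hlt.
apply/eqP; apply: contraTT hlt => hne.
rewrite -leqNgt; apply: Hmin; apply/existsP.
have ha : (a' < (a' + b').+1)%N by rewrite ltnS leq_addr.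
by exists (Ordinal ha); rewrite /= addKn.
Qed.

Lemma psmul_corner (F G : ps) a b : (forall i j, (i + j < a + b)%N -> F i j = 0) ->
  psmul F G a b = F a b * G 0%N 0%N.
Proof.
move=> HF; rewrite /psmul big_ord_recr /= big1 ?add0r; last first.
  move=> i _; apply: big1 => j _; rewrite HF ?mul0r //.
  by move: (ltn_ord i) (ltn_ord j) => /= hi hj; lia.
rewrite big_ord_recr /= big1 ?add0r; last first.
  by move=> j _; rewrite HF ?mul0r //; move: (ltn_ord j) => /= hj; lia.
by rewrite !subnn.
Qed.

Lemma Jac_low f l n a b : (forall a b, (a + b < n.+1)%N -> f a b = 0) -> (a + b <= n)%N ->
  Jac f l a b = l 0%N 1%N * (f a.+1 b *+ a.+1) - l 1%N 0%N * (f a b.+1 *+ b.+1).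
Proof.
move=> Hf hab; rewrite /Jac !psmul_corner.
- by rewrite /dX /dY !mulr1n mulrC [X in _ - X]mulrC.
- move=> i j hij; rewrite /dY Hf ?mul0rn //; rewrite addnS ltnS.
  lia.
- move=> i j hij; rewrite /dX Hf ?mul0rn //; rewrite addSn ltnS.
  lia.
Qed.

Lemma Ev_Jac f l n : (forall a b, (a + b < n.+1)%N -> f a b = 0) ->
  Ev (Jac f l) n (l 0%N 1%N) (- l 1%N 0%N) = Ev f n.+1 (l 0%N 1%N) (- l 1%N 0%N) *+ n.+1.
Proof.
move=> Hf.
set q := l 0%N 1%N; set p := l 1%N 0%N.
pose F a := f a (n.+1 - a)%N * q ^+ a * (-p) ^+ (n.+1 - a)%N.
rewrite /Ev (eq_bigr (fun i : 'I_n.+1 => (F i.+1 *+ i.+1) + (F i *+ (n.+1 - i)%N))); last first.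
  move=> i _; have hi : (i <= n)%N by rewrite -ltnS.
  rewrite (Jac_low f l n i (n - i)%N Hf); last by rewrite subnKC.
  rewrite /F subSS subSn // !exprS -/p -/q. ring.
rewrite big_split /= -sumrMnl.
rewrite (eq_bigr (fun i : 'I_n.+2 => F i *+ i + F i *+ (n.+1 - i)%N)); last first.
  move=> i _; rewrite -mulrnDr subnKC //; by rewrite -ltnS.
rewrite big_split /= [X in _ = X + _]big_ord_recl [X in _ = _ + X]big_ord_recr /= subnn !mulr0n add0r addr0.
done.
Qed.

Lemma div_q0 (g : ps) (d : nat) (p : CC) : p != 0 -> Ev g d 0 (-p) = 0 ->
  exists h, homog_part g d = psmul (linform p 0) h.
Proof.
move=> hp hE.
have g0 : g 0%N d = 0.
  move: hE; rewrite /Ev big_ord_recl big1 ?addr0 /=; last first.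
    by move=> i _; rewrite /bump /= expr0n /= mulr0 mul0r.
  rewrite subn0 expr0 mulr1 => /eqP; rewrite mulf_eq0 expf_eq0 oppr_eq0 (negPf hp) andbF orbF.
  by move/eqP.
exists (fun a b => if (a.+1 + b == d)%N then g a.+1 b / p else 0).
apply: functional_extensionality => a; apply: functional_extensionality => b.
rewrite psmul_lin /homog_part.
case: a => [|a]; case: b => [|b] /=; rewrite ?mul0r ?addr0 ?add0r.
- by rewrite add0n; case: eqP => // hd; move: g0; rewrite -hd.
- by rewrite add0n; case: eqP => // hd; move: g0; rewrite -hd.
- case: ifP => _ //; last by rewrite mulr0.
  field; exact: hp.
- case: ifP => _ //; last by rewrite mulr0.
  field; exact: hp.
Qed.

Definition Hs (g : ps) (d : nat) (p q : CC) (a : nat) : CC :=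
  \sum_(i < a.+1) g i (d - i)%N * (-p) ^+ (a - i)%N * q^-1 ^+ (a - i).+1.

Lemma Hs_rec (g : ps) (d : nat) (p q : CC) (a : nat) : q != 0 ->
  q * Hs g d p q a.+1 = g a.+1 (d - a.+1)%N - p * Hs g d p q a.
Proof.
move=> hq; rewrite /Hs big_ord_recr /= subnn expr0 expr1 mulr1.
set S1 := \sum_(i < a.+1) _; set S2 := \sum_(i < a.+1) _.
have e : q * S1 = - p * S2.
  rewrite /S1 /S2 !mulr_sumr; apply: eq_bigr => i _.
  have hi : (i <= a)%N by rewrite -ltnS.
  rewrite /= subSn // !exprS.
  have L : forall X Y Z : CC, q * (Y * (- p * Z) * (q^-1 * (q^-1 * X))) = - p * (Y * Z * (q^-1 * X)).
    by move=> X Y Z; field.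
  exact: L.
clearbody S1 S2.
transitivity (q * S1 + g a.+1 (d - a.+1)%N); first by field.
transitivity (- p * S2 + g a.+1 (d - a.+1)%N); first by congr (_ + _).
ring.
Qed.

Lemma Hs_d (g : ps) (d : nat) (p q : CC) : q != 0 -> Hs g d p q d = q^-1 ^+ d.+1 * Ev g d q (-p).
Proof.
move=> hq; rewrite /Hs /Ev mulr_sumr; apply: eq_bigr => i _.
have hi : (i <= d)%N by rewrite -ltnS.
have -> : q^-1 ^+ d.+1 = q^-1 ^+ i * q^-1 ^+ (d - i).+1 by rewrite -exprD addnS subnKC.
have hqi : q^-1 ^+ i * q ^+ i = 1 by rewrite -exprMn mulVf // expr1n.
rewrite [RHS](_ : _ = (q^-1 ^+ i * q ^+ i) * (g i (d-i)%N * (-p)^+(d-i) * q^-1^+(d-i).+1)); last by ring.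
by rewrite hqi mul1r.
Qed.

Lemma div_q (g : ps) (d : nat) (p q : CC) : q != 0 -> Ev g d q (-p) = 0 ->
  exists h, homog_part g d = psmul (linform p q) h.
Proof.
move=> hq hE.
have H0 : Hs g d p q d = 0 by rewrite Hs_d // hE mulr0.
exists (fun a b => if (a + b.+1 == d)%N then Hs g d p q a else 0).
apply: functional_extensionality => a; apply: functional_extensionality => b.
rewrite psmul_lin /homog_part.
case: a => [|a]; case: b => [|b] /=; rewrite ?addr0 ?add0r.
- case: eqP => // hd; move: H0; rewrite -hd /Hs big_ord_recl big_ord0 /= addr0.
  move=> /eqP; rewrite !mulf_eq0 expr0 oner_eq0 orbF expf_eq0 invr_eq0 (negPf hq) andbF orbF.
  by move/eqP.
- rewrite add0n; case: eqP => hd; last by rewrite mulr0.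
  rewrite /Hs big_ord_recl big_ord0 /= addr0 -hd subn0 expr0 mulr1 expr1.
  field; exact: hq.
- rewrite addn0 addn1; case: eqP => hd; last by rewrite mulr0.
  rewrite hd; have := Hs_rec g d p q a hq; rewrite hd H0 mulr0 subnn => /eqP.
  by rewrite eq_sym subr_eq0 => /eqP.
- have -> : (a.+1 + b.+1 == d)%N = (a + b.+2 == d)%N by rewrite addSnnS.
  case: ifP => hd; last by rewrite !mulr0 addr0.
  rewrite Hs_rec //; have <- : (d - a.+1)%N = b.+1 by move/eqP: hd => <-; lia.
  ring.
Qed.

Theorem mainTheorem2 (f l : ps) :
  convergent f -> f <> ps0 -> f 0%N 0%N = 0 -> reduced f ->
  convergent l -> l 0%N 0%N = 0 -> has_ord l 1 ->
  Jac f l 0%N 0%N = 0 ->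
  transverse l f -> transverse l (Jac f l).
Proof.
move=> _ fnz f00 _ _ l00 hl1 J00 [hl0 [_ Htr]].
have pq : (l 1%N 0%N != 0) || (l 0%N 1%N != 0).
  case: hl1 => /existsP [[[|[|k]] hk] /= H] _ //.
  by rewrite H orbT.
  by rewrite H.
have [m hm] := has_ord_ex f fnz.
case: m hm => [|n] hm.
  case: hm => /existsP [[[|k] hk] /= H] _ //; by rewrite f00 eqxx in H.
have Hf := hm.2.
have Ef : Ev f n.+1 (l 0%N 1%N) (- l 1%N 0%N) != 0.
  apply/eqP => E0; apply: Htr; exists (l 1%N 0%N), (l 0%N 1%N); split.
  - split; first by case/orP: pq => ->; [left|right].
    exists 1%N; split => //; exists ps1.
    apply: functional_extensionality => a; apply: functional_extensionality => b.
    rewrite psmul_lin /homog_part /ps1.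
    case: a => [|[|a]]; case: b => [|[|b]] //=; rewrite ?mulr0 ?mulr1 ?addr0 ?add0r //.
  - split; first by case/orP: pq => ->; [left|right].
    exists n.+1; split => //.
    case: (eqVneq (l 0%N 1%N) 0) => hq.
    + rewrite hq; apply: div_q0; first by move: pq; rewrite hq eqxx orbF.
      by move: E0; rewrite hq.
    + exact: div_q.
have EJ : Ev (Jac f l) n (l 0%N 1%N) (- l 1%N 0%N) != 0.
  by rewrite Ev_Jac // mulrn_eq0 negb_or Ef.
have HJ : has_ord (Jac f l) n.
  split.
  - case: (boolP [exists a : 'I_n.+1, Jac f l a (n - a)%N != 0]) => // H.
    exfalso; move/negP: EJ; apply; apply/eqP; apply: big1 => i _.
    by move: H => /existsPn/(_ i)/negPn/eqP ->; rewrite !mul0r.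
  - move=> a b hab; rewrite (Jac_low f l n a b Hf) ?Hf ?mul0rn ?mulr0 ?subr0 //; lia.
split => //; split.
  move=> H; move: HJ => [/existsP [i Hi] _]; move: Hi; by rewrite H /ps0 eqxx.
move=> [u [v [[_ [d1 [hd1 [h1 Hh1]]]] [_ [d2 [hd2 [h2 Hh2]]]]]]].
have e1 := has_ord_uniq _ _ _ hd1 hl1; have e2 := has_ord_uniq _ _ _ hd2 HJ; subst d1 d2.
have E2 := Ev_div _ _ _ _ _ Hh2.
have P1 := congr1 (fun F => F 1%N 0%N) Hh1.
have P2 := congr1 (fun F => F 0%N 1%N) Hh1.
move: P1 P2; rewrite /= !psmul_lin /homog_part /= addr0 add0r => e3 e4.
move/negP: EJ; apply; rewrite e3 e4.
rewrite (_ : v * h1 0%N 0%N = h1 0%N 0%N * v); last by rewrite mulrC.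
rewrite (_ : - (u * h1 0%N 0%N) = h1 0%N 0%N * - u); last by rewrite mulrN mulrC.
by rewrite Ev_scale E2 mulr0.
Qed.
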